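(* Let $K$ be a finite ordered simplicial complex. Then there exists $C\in\mathbb{N}$ such that every crystalline subdivision $K_\ell$, $\ell\in\mathbb{N}$, of $K$ admits a coloring of size $C$.
   Context: A simplicial complex is a locally finite set of linear simplices in $\mathbb{R}^N$ closed under faces with pairwise intersections common faces; ordered means vertices totally ordered. $K_\ell$ is the $\ell$th crystalline subdivision: for an ordered $m$-simplex $\langle v_0,\dots,v_m\rangle$, $m>0$, let $\iota$ be the affine map into $[0,1]^m$ with $\iota(v_j)=(0,\dots,0,1,\dots,1)$ ($j$ zeros followed by $m-j$ ones); subdivide $[0,1]^m$ into $2^{\ell m}$ cubes of side $2^{-\ell}$, each into the $m!$ rescaled translates of $\{0\le x_{\pi(1)}\le\dots\le x_{\pi(m)}\le1\}$, and pull back via $\iota$; apply to all simplices of $K$. Two simplices are adjacent if they share a face; the star of a simplex is the set of simplices adjacent to it together with their faces. A coloring of size $C$ of a complex is a surjective map $c$ from its set of top-dimensional simplices to $\{0,\dots,C\}$ such that $c(\Delta)\neq c(\Delta')$ for distinct top simplices $\Delta,\Delta'$ whose stars intersect. *)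

(* Defs.v *)
From HB Require Import structures.
From mathcomp Require Import all_boot all_order all_algebra fingroup perm.
From mathcomp Require Import reals.
Set Implicit Arguments. Unset Strict Implicit. Unset Printing Implicit Defensive.
Import Order.TTheory GRing.Theory Num.Theory.
Local Open Scope ring_scope.

Section Defs.
Variable R : realType.

Definition conv (n : nat) (s : seq 'rV[R]_n) (x : 'rV[R]_n) : Prop :=
  exists lam : 'I_(size s) -> R,
    (forall i, 0 <= lam i) /\ \sum_i lam i = 1 /\ x = \sum_i lam i *: s`_i.

Definition aff_indep (n : nat) (s : seq 'rV[R]_n) : Prop :=
  forall lam : 'I_(size s) -> R,
    \sum_i lam i = 0 -> \sum_i lam i *: s`_i = 0 -> forall i, lam i = 0.

(* A finite ordered simplicial complex in R^N: every simplex is listed by its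
   vertices, in increasing order for a strict total order r on the vertex set.
   Faces of an ordered simplex are its nonempty subsequences. *)
Definition is_vertex (N : nat) (K : seq (seq 'rV[R]_N)) (v : 'rV[R]_N) :=
  exists2 s, s \in K & v \in s.

Definition ordered_simplicial_complex (N : nat) (K : seq (seq 'rV[R]_N))
    (r : rel 'rV[R]_N) : Prop :=
  [/\
      forall s, s \in K -> s != [::] /\ aff_indep s,
      forall s t, s \in K -> subseq t s -> t != [::] -> t \in K,
      forall s t, s \in K -> t \in K ->
        (forall x, ~ (conv s x /\ conv t x)) \/
        exists u, [/\ u \in K, subseq u s, subseq u t &
                       forall x, (conv s x /\ conv t x) <-> conv u x],
      (forall v, is_vertex K v -> ~~ r v v) /\
      (forall u v w, is_vertex K u -> is_vertex K v -> is_vertex K w ->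
                     r u v -> r v w -> r u w) /\
      (forall u v, is_vertex K u -> is_vertex K v -> u != v -> r u v || r v u)
    &
      forall s, s \in K -> sorted r s].

(* iota(v_j) = (0,...,0,1,...,1) in R^m with j zeros *)
Definition iota_pt (m j : nat) : 'rV[R]_m :=
  \row_(k < m) (if (j <= k)%N then 1 else 0).

(* x is the pullback via iota (for the ordered simplex s) of w in R^m,
   m = dim s: x = sum lam_j v_j, w = sum lam_j iota(v_j), sum lam_j = 1 *)
Definition pullback (N : nat) (s : seq 'rV[R]_N) (w : 'rV[R]_((size s).-1))
    (x : 'rV[R]_N) : Prop :=
  exists lam : 'I_(size s) -> R,
    [/\ \sum_i lam i = 1, x = \sum_i lam i *: s`_i &
        w = \sum_i lam i *: iota_pt (size s).-1 i].

(* j-th vertex (j = 0..m) of the simplex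
   a/2^l + 2^-l {0 <= x_{pi 0} <= ... <= x_{pi (m-1)} <= 1}
   of the l-th subdivision of [0,1]^m, a being the corner of a small cube *)
Definition cellv (l m : nat) (a : 'I_m -> 'I_(2 ^ l)) (pi : 'S_m) (j : nat)
    : 'rV[R]_m :=
  \row_(k < m) (((a k)%:R + (if (j <= (pi^-1)%g k)%N then 1 else 0))
                 / (2 ^+ l)).

(* The l-th crystalline subdivision K_l, as the set of its simplices
   (each given by a list of its vertices). *)
Definition crystalline (N : nat) (K : seq (seq 'rV[R]_N)) (l : nat)
    (t : seq 'rV[R]_N) : Prop :=
  exists2 s, s \in K &
  exists (a : 'I_(size s).-1 -> 'I_(2 ^ l)) (pi : 'S_((size s).-1)),
    (forall j : 'I_(size s),
        conv [seq iota_pt (size s).-1 i | i <- iota 0 (size s)]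
             (cellv a pi j)) /\
    exists xs : seq 'rV[R]_N,
      [/\ size xs = size s,
          forall j : 'I_(size s), @pullback N s (cellv a pi j) xs`_j,
          subseq t xs & t != [::]].

Definition face_of (N : nat) (F D : seq 'rV[R]_N) := {subset F <= D}.

Definition top_simplex (N : nat) (P : seq 'rV[R]_N -> Prop) (D : seq 'rV[R]_N) :=
  P D /\ forall E, P E -> (size E <= size D)%N.

Definition adjacent (N : nat) (P : seq 'rV[R]_N -> Prop) (A B : seq 'rV[R]_N) :=
  exists F, [/\ P F, F != [::], face_of F A & face_of F B].

Definition star (N : nat) (P : seq 'rV[R]_N -> Prop) (D F : seq 'rV[R]_N) :=
  P F /\ exists A, [/\ P A, adjacent P A D & face_of F A].

Definition stars_meet (N : nat) (P : seq 'rV[R]_N -> Prop) (D D' : seq 'rV[R]_N) :=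
  exists F, star P D F /\ star P D' F.

Definition coloring (N : nat) (P : seq 'rV[R]_N -> Prop)
    (c : seq 'rV[R]_N -> nat) (C : nat) : Prop :=
  [/\ (* well defined on simplices (independent of vertex listing) *)
      forall D D', top_simplex P D -> top_simplex P D' -> D =i D' -> c D = c D',
      forall D, top_simplex P D -> (c D <= C)%N,
      forall k, (k <= C)%N -> exists D, top_simplex P D /\ c D = k
    & forall D D', top_simplex P D -> top_simplex P D' -> ~ (D =i D') ->
        stars_meet P D D' -> c D <> c D'].

End Defs.

(* Main.v *)
Require Import Defs.
From HB Require Import structures.
From mathcomp Require Import all_boot all_order all_algebra fingroup perm.
From mathcomp Require Import reals boolp.
From mathcomp Require Import zify ring lra.
Set Implicit Arguments. Unset Strict Implicit. Unset Printing Implicit Defensive.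
Import Order.TTheory GRing.Theory Num.Theory.
Local Open Scope ring_scope.

Section A.
Variable R : realType.

Lemma sum_cast (V : nmodType) n1 n2 (e : n1 = n2) (F : 'I_n1 -> V) :
  \sum_i F i = \sum_(j : 'I_n2) F (cast_ord (esym e) j).
Proof. by case: n2 / e; apply: eq_bigr => i _; rewrite cast_ord_id. Qed.

Lemma nth_iota_map m n (i : nat) : (i < n)%N ->
  [seq iota_pt R m i | i <- iota 0 n]`_i = iota_pt R m i.
Proof. by move=> hi; rewrite (nth_map 0%N) ?size_iota // nth_iota. Qed.

Lemma conv_iota m n (w : 'rV[R]_m) :
  conv [seq iota_pt R m i | i <- iota 0 n] w ->
  exists mu : 'I_n -> R, [/\ forall i, 0 <= mu i, \sum_i mu i = 1 &
     w = \sum_i mu i *: iota_pt R m i].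
Proof.
case=> lam [h0 [h1 h2]].
have e : size [seq iota_pt R m i | i <- iota 0 n] = n by rewrite size_map size_iota.
exists (fun j => lam (cast_ord (esym e) j)); split => //.
  by rewrite -h1 (sum_cast e).
rewrite h2 (sum_cast e); apply: eq_bigr => j _.
by rewrite nth_iota_map //= ltn_ord.
Qed.

Definition wc m (w : 'rV[R]_m) (k : nat) : R :=
  if insub k is Some k' then w 0 k' else 0.

Lemma wcE m (w : 'rV[R]_m) (k : 'I_m) : wc w k = w 0 k.
Proof. by rewrite /wc valK. Qed.

Lemma wc_out m (w : 'rV[R]_m) k : (m <= k)%N -> wc w k = 0.
Proof. by move=> h; rewrite /wc insubF // ltnNge h. Qed.

Definition Ps n (w : 'rV[R]_n.-1) (t : nat) : R :=
  if (t < n.-1)%N then wc w t else 1.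

Definition L n (w : 'rV[R]_n.-1) (i : nat) : R :=
  Ps w i - (if i is i'.+1 then Ps w i' else 0).

Lemma Linv n (c : 'I_n -> R) (w : 'rV[R]_n.-1) :
  \sum_i c i = 1 -> w = \sum_i c i *: iota_pt R n.-1 i ->
  forall i : 'I_n, c i = L w i.
Proof.
move=> h1 hw.
have PsE : forall t, (t <= n.-1)%N -> Ps w t = \sum_(j : 'I_n | (j <= t)%N) c j.
  move=> t ht; rewrite /Ps; case: ifP => htn.
    rewrite (_ : t = Ordinal htn) // wcE hw summxE [RHS]big_mkcond /=.
    apply: eq_bigr => j _; rewrite !mxE /=.
    by case: ifP => _; rewrite ?mulr1 ?mulr0.
  have -> : t = n.-1 by apply/eqP; rewrite eqn_leq ht leqNgt htn.
  rewrite -h1; apply: eq_bigl => j /=.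
  by case: j => j /= hj; apply/esym; lia.
move=> i.
have hi : (i <= n.-1)%N by case: i => i /= hi; lia.
rewrite /L PsE //.
case Ei: (nat_of_ord i) hi => [|i'] hi.
  rewrite subr0 (big_pred1 i) // => j /=.
  by rewrite -(inj_eq val_inj) /= Ei leqn0.
rewrite PsE; last by lia.
rewrite (bigD1 i) /= ?Ei //.
have -> : \sum_(i0 < n | (i0 <= i'.+1)%N && (i0 != i)) c i0 =
  \sum_(j < n | (j <= i')%N) c j; last by rewrite addrK.
apply: eq_bigl => j /=.
by rewrite -(inj_eq val_inj) /= Ei; case: j => j /= _; apply/idP/idP; lia.
Qed.

Lemma Ps_sum n (w : 'rV[R]_n.-1) : forall k, (k < n)%N ->
  Ps w k = \sum_(i : 'I_n | (i <= k)%N) L w i.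
Proof.
elim=> [|k IH] hk.
  rewrite (big_pred1 (Ordinal hk)) /L ?subr0 // => j /=.
  by rewrite -(inj_eq val_inj) /= leqn0.
rewrite (bigD1 (Ordinal hk)) //=.
have -> : \sum_(i < n | (i <= k.+1)%N && (i != Ordinal hk)) L w i =
  \sum_(i < n | (i <= k)%N) L w i.
  apply: eq_bigl => j /=.
  by rewrite -(inj_eq val_inj) /=; case: j => j /= _; apply/idP/idP; lia.
by rewrite -IH ?(ltn_trans _ hk) // /L subrK.
Qed.

Lemma L_ext n (w w' : 'rV[R]_n.-1) : (forall k, wc w k = wc w' k) ->
  forall i, L w i = L w' i.
Proof. by move=> h [|i]; rewrite /L /Ps ?h. Qed.

Lemma nat_close (A A' B Md : nat) : `|(A%:R : R) - A'%:R| <= B%:R ->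
  (B < Md)%N -> (A %% Md = A' %% Md)%N -> A = A'.
Proof.
move=> h hB hm.
move: h; rewrite ler_norml => /andP [h1 h2].
have e1 : (A <= A' + B)%N by rewrite -(ler_nat R) natrD; lra.
have e2 : (A' <= A + B)%N by rewrite -(ler_nat R) natrD; lra.
clear h1 h2.
wlog hAA : A A' e1 e2 hm / (A <= A')%N.
  move=> W; case: (leqP A A') => [|/ltnW] hh; first exact: W.
  by apply/esym/W.
have : (Md %| A' - A)%N by rewrite -eqn_mod_dvd // hm.
case E: (A' - A)%N => [|d] hd; first lia.
move/(dvdn_leq (ltn0Sn _)): hd; lia.
Qed.

Lemma L_close n (w w' : 'rV[R]_n.-1) e :
  (forall k, `|wc w k - wc w' k| <= e) -> forall i, `|L w i - L w' i| <= 2 * e.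
Proof.
move=> h.
have hP : forall t, `|Ps w t - Ps w' t| <= e.
  move=> t; rewrite /Ps; case: ifP => _ //.
  by rewrite subrr normr0 (le_trans _ (h 0%N)).
have h0 : 0 <= e by apply: le_trans (h 0%N).
move=> [|i]; rewrite /L.
  by rewrite !subr0 (le_trans (hP 0%N)) // ler_peMl // ler1n.
have -> : Ps w i.+1 - Ps w i - (Ps w' i.+1 - Ps w' i) =
   (Ps w i.+1 - Ps w' i.+1) - (Ps w i - Ps w' i) by ring.
apply: (le_trans (ler_normB _ _)).
by rewrite mulr2n mulrDl mul1r lerD.
Qed.


Lemma wc_cellv l m (a : 'I_m -> 'I_(2 ^ l)) (pi : 'S_m) j (k : 'I_m) :
  (2 ^+ l : R) * wc (cellv R a pi j) k = (a k + (j <= (pi^-1)%g k))%:R.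
Proof.
rewrite wcE mxE mulrC divfK ?expf_neq0 ?pnatr_eq0 // natrD.
by case: ifP.
Qed.

Lemma cellv_close l m (a : 'I_m -> 'I_(2 ^ l)) (pi : 'S_m) j j' k :
  `|wc (cellv R a pi j) k - wc (cellv R a pi j') k| <= (2 ^+ l)^-1.
Proof.
case: (ltnP k m) => hk; last by rewrite !wc_out // subrr normr0 invr_ge0 exprn_ge0.
have h2 : (0 : R) < 2 ^+ l by rewrite exprn_gt0.
rewrite (_ : k = Ordinal hk) // !wcE !mxE -mulrBl normrM.
have h2' : (0 : R) <= (2 ^+ l)^-1 by rewrite invr_ge0 ltW.
rewrite [`|(2 ^+ l)^-1|]ger0_norm //.
apply: ler_piMl => //.
rewrite opprD addrACA subrr add0r.
by case: ifP; case: ifP => _ _; rewrite ?subrr ?subr0 ?sub0r ?normr0 ?normrN ?normr1.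
Qed.

End A.

Section C.
Variable R : realType.
Variable N : nat.

Lemma sum_ind n (i : 'I_n) (F : 'I_n -> 'rV[R]_N) :
  \sum_k ((if k == i then 1 else 0) : R) *: F k = F i.
Proof.
by rewrite (bigD1 i) //= eqxx scale1r big1 ?addr0 // => k /negbTE ->; rewrite scale0r.
Qed.

Lemma sum_ind1 n (i : 'I_n) : \sum_k ((if k == i then 1 else 0) : R) = 1.
Proof. by rewrite -big_mkcond big_pred1_eq. Qed.

Lemma aff_uniq (s : seq 'rV[R]_N) : aff_indep s -> uniq s.
Proof.
move=> ha; apply: contraT => /(uniqPn 0) [i [j [hij hj e]]].
have hi : (i < size s)%N by apply: ltn_trans hj.
pose i' := Ordinal hi; pose j' := Ordinal hj.
pose lam := fun k : 'I_(size s) => ((if k == i' then 1 else 0) : R) - (if k == j' then 1 else 0).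
have := ha lam.
rewrite /lam sumrB !sum_ind1 subrr.
have -> : \sum_i0 ((if i0 == i' then 1 else 0) - (if i0 == j' then 1 else 0)) *: s`_i0 = 0.
  under eq_bigr do rewrite scalerBl.
  by rewrite sumrB !sum_ind e subrr.
move=> /(_ erefl erefl i'); rewrite eqxx.
have -> : (i' == j') = false by rewrite -(inj_eq val_inj) /=; apply/negbTE; lia.
by move/eqP; rewrite subr0 oner_eq0.
Qed.


Lemma sum_nth1 (V : nmodType) (s : seq 'rV[R]_N) (F : 'I_(size s) -> V)
  (i : 'I_(size s)) : uniq s -> \sum_(k : 'I_(size s) | s`_k == s`_i) F k = F i.
Proof. by move=> u; apply: big_pred1 => k /=; rewrite nth_uniq. Qed.

Lemma sum_nth0 (V : nmodType) (s : seq 'rV[R]_N) (F : 'I_(size s) -> V) v :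
  v \notin s -> \sum_(k : 'I_(size s) | s`_k == v) F k = 0.
Proof.
move=> hv; apply: big_pred0 => k; apply/negbTE; apply: contra hv => /eqP <-.
exact: mem_nth.
Qed.

Lemma idx_of (s : seq 'rV[R]_N) y : y \in s -> {i : 'I_(size s) | s`_i = y}.
Proof.
move=> hy; have h : (index y s < size s)%N by rewrite index_mem.
by exists (Ordinal h); rewrite /= nth_index.
Qed.

Lemma sub_rep (s u : seq 'rV[R]_N) (lam : 'I_(size s) -> R) (nu : 'I_(size u) -> R) :
  aff_indep s -> {subset u <= s} ->
  \sum_i lam i = 1 -> \sum_i nu i = 1 ->
  \sum_i lam i *: s`_i = \sum_i nu i *: u`_i ->
  forall v, \sum_(i : 'I_(size s) | s`_i == v) lam i = \sum_(k : 'I_(size u) | u`_k == v) nu k.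
Proof.
move=> ha hsub hl hn hx v.
have us := aff_uniq ha.
have idx : forall k : 'I_(size u), {i : 'I_(size s) | s`_i = u`_k}.
  by move=> k; apply: idx_of; apply: hsub; apply: mem_nth.
have X : forall (V : nmodType) (G : 'I_(size s) -> 'I_(size u) -> V),
    \sum_(i : 'I_(size s)) \sum_(k : 'I_(size u) | u`_k == s`_i) G i k = \sum_k G (sval (idx k)) k.
  move=> V G.
  under eq_bigr do rewrite big_mkcond /=.
  rewrite exchange_big /=; apply: eq_bigr => k _.
  rewrite -big_mkcond /=.
  case: (idx k) => i /= hi.
  rewrite -hi; under eq_bigl do rewrite eq_sym.
  exact: sum_nth1.
pose lam' := fun i : 'I_(size s) => \sum_(k : 'I_(size u) | u`_k == s`_i) nu k.
have e : forall i, lam i = lam' i.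
  have := ha (fun i => lam i - lam' i).
  rewrite sumrB hl /lam' (X _ (fun _ k => nu k)) hn subrr.
  under eq_bigr do rewrite scalerBl.
  rewrite sumrB hx.
  under [X in _ - X]eq_bigr do rewrite scaler_suml.
  rewrite (X _ (fun i k => nu k *: s`_i)) /=.
  under [X in _ - X]eq_bigr do rewrite (svalP (idx _)).
  rewrite subrr => /(_ erefl erefl) h i; apply/eqP; rewrite -subr_eq0; exact/eqP/h.
under eq_bigr do rewrite e.
rewrite big_mkcond /=.
have -> : \sum_(i : 'I_(size s)) (if s`_i == v then lam' i else 0) =
   \sum_(i : 'I_(size s)) \sum_(k : 'I_(size u) | u`_k == s`_i) (if s`_i == v then nu k else 0).
  apply: eq_bigr => i _; case: ifP => // _; by rewrite big1.
rewrite X [RHS]big_mkcond; apply: eq_bigr => k _.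
by rewrite (svalP (idx k)).
Qed.


Variable K : seq (seq 'rV[R]_N).
Variable r : rel 'rV[R]_N.
Hypothesis HK : ordered_simplicial_complex K r.

Lemma K_aff s : s \in K -> aff_indep s.
Proof. by case: HK => h _ _ _ _ hs; case: (h s hs). Qed.

Lemma K_nil s : s \in K -> s != [::].
Proof. by case: HK => h _ _ _ _ hs; case: (h s hs). Qed.

Definition hasrep x (s : seq 'rV[R]_N) (lam : 'I_(size s) -> R) :=
  [/\ s \in K, forall i, 0 <= lam i, \sum_i lam i = 1 & x = \sum_i lam i *: s`_i].
Arguments hasrep : clear implicits.

Lemma rep_uniq x s t lam mu : hasrep x s lam -> hasrep x t mu ->
  forall v, \sum_(i : 'I_(size s) | s`_i == v) lam i =
            \sum_(i : 'I_(size t) | t`_i == v) mu i.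
Proof.
case=> hs hl0 hl1 hlx [ht hm0 hm1 hmx] v.
have cs : conv s x by exists lam.
have ct : conv t x by exists mu.
case: HK => _ _ h3 _ _.
case: (h3 s t hs ht) => [/(_ x) []//|[u [hu sus sut hc]]].
case: (hc x).1 => // nu [hn0 [hn1 hnx]].
rewrite (sub_rep (K_aff hs) (mem_subseq sus) hl1 hn1 _ v) -?hlx //.
by rewrite (sub_rep (K_aff ht) (mem_subseq sut) hm1 hn1 _ v) -?hmx.
Qed.

Definition beta x v : R :=
  match pselect (exists p : {s : seq 'rV[R]_N & 'I_(size s) -> R},
                   hasrep x (projT1 p) (projT2 p)) with
  | left H => let p := projT1 (cid H) in
      \sum_(i : 'I_(size (projT1 p)) | (projT1 p)`_i == v) projT2 p i
  | right _ => 0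
  end.

Lemma beta_eq x s lam v : hasrep x s lam ->
  beta x v = \sum_(i : 'I_(size s) | s`_i == v) lam i.
Proof.
move=> h; rewrite /beta; case: pselect => [H|H].
  case: (cid H) => p hp /=; exact: rep_uniq hp h v.
by exfalso; apply: H; exists (existT _ s lam).
Qed.


Definition cellok l (s : seq 'rV[R]_N) (a : 'I_(size s).-1 -> 'I_(2 ^ l))
    (pi : 'S_((size s).-1)) (xs : seq 'rV[R]_N) :=
  [/\ s \in K,
      forall j : 'I_(size s),
        conv [seq iota_pt R (size s).-1 i | i <- iota 0 (size s)] (cellv R a pi j),
      size xs = size s &
      forall j : 'I_(size s), @pullback R N s (cellv R a pi j) xs`_j].

Lemma crysP l t : crystalline K l t <->
  exists s a pi xs, [/\ @cellok l s a pi xs, subseq t xs & t != [::]].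
Proof.
split.
  case=> s hs [a [pi [hc [xs [h1 h2 h3 h4]]]]].
  by exists s, a, pi, xs; split.
case=> s [a [pi [xs [[hs hc h1 h2] h3 h4]]]].
by exists s => //; exists a, pi; split => //; exists xs.
Qed.

Lemma cell_rep l s a pi xs : @cellok l s a pi xs -> forall j : 'I_(size s),
  hasrep (xs`_j) s (fun i => L (cellv R a pi j) i).
Proof.
case=> hs hc hsz hp j.
case: (hp j) => lam [h1 hx hw].
have el := Linv h1 hw.
case: (conv_iota (hc j)) => mu [m0 m1 mw].
have em := Linv m1 mw.
split => //.
- by move=> i; rewrite -em.
- by under eq_bigr do rewrite -el.
- by rewrite hx; apply: eq_bigr => i _; rewrite el.
Qed.

Lemma beta_cell l s a pi xs : @cellok l s a pi xs -> forall (j i : 'I_(size s)),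
  beta (xs`_j) (s`_i) = L (cellv R a pi j) i.
Proof.
move=> h j i; rewrite (beta_eq _ (cell_rep h j)).
case: h => hs _ _ _.
exact: (sum_nth1 (fun i => L (cellv R a pi j) i) i (aff_uniq (K_aff hs))).
Qed.

Lemma beta_cell0 l s a pi xs : @cellok l s a pi xs -> forall (j : 'I_(size s)) v,
  v \notin s -> beta (xs`_j) v = 0.
Proof.
move=> h j v hv; rewrite (beta_eq _ (cell_rep h j)).
exact: sum_nth0.
Qed.

Lemma close l E p q : crystalline K l E -> p \in E -> q \in E ->
  forall v, `|beta p v - beta q v| <= 2 * (2 ^+ l)^-1.
Proof.
case/crysP => s [a [pi [xs [hc hsub _]]]] hp hq v.
have hsz : size xs = size s by case: hc.
case: (idx_of (mem_subseq hsub hp)) => jp ep.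
case: (idx_of (mem_subseq hsub hq)) => jq eq.
pose jp' := cast_ord hsz jp; pose jq' := cast_ord hsz jq.
have -> : p = xs`_jp' by rewrite -ep.
have -> : q = xs`_jq' by rewrite -eq.
case: (boolP (v \in s)) => hv.
  case: (idx_of hv) => i <-.
  rewrite !(beta_cell hc).
  by apply: L_close => k; apply: cellv_close.
rewrite !(beta_cell0 hc) // subrr normr0 mulr_ge0 // invr_ge0 exprn_ge0 //.
Qed.


Lemma key l s a a' pi pi' xs xs' (Md : nat) :
  @cellok l s a pi xs -> @cellok l s a' pi' xs' -> (8 * size s < Md)%N ->
  (forall (j : 'I_(size s)) (k : 'I_(size s).-1),
     ((a k + (j <= (pi^-1)%g k)) %% Md = (a' k + (j <= (pi'^-1)%g k)) %% Md)%N) ->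
  (forall (j : 'I_(size s)) v,
     `|beta (xs`_j) v - beta (xs'`_j) v| <= 8 * (2 ^+ l)^-1) ->
  xs = xs'.
Proof.
move=> hc hc' hMd hcode hb.
have hsz : size xs = size s by case: hc.
have hsz' : size xs' = size s by case: hc'.
have h2 : (0 : R) < 2 ^+ l by rewrite exprn_gt0.
have hw : forall j : 'I_(size s), forall k,
    wc (cellv R a pi j) k = wc (cellv R a' pi' j) k.
  move=> j k; case: (ltnP k (size s).-1) => hk; last by rewrite !wc_out.
  pose k' := Ordinal hk.
  have hkn : (k < size s)%N by lia.
  have bnd : `|wc (cellv R a pi j) k - wc (cellv R a' pi' j) k| <=
             (size s)%:R * (8 * (2 ^+ l)^-1).
    have E1 : wc (cellv R a pi j) k =
        \sum_(i : 'I_(size s) | (i <= k)%N) L (cellv R a pi j) i.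
      by rewrite -Ps_sum // /Ps hk.
    have E2 : wc (cellv R a' pi' j) k =
        \sum_(i : 'I_(size s) | (i <= k)%N) L (cellv R a' pi' j) i.
      by rewrite -Ps_sum // /Ps hk.
    rewrite E1 E2 -sumrB.
    apply: le_trans (ler_norm_sum _ _ _) _.
    apply: (@le_trans _ _ (\sum_(i : 'I_(size s) | (i <= k)%N) 8 * (2 ^+ l)^-1)).
      apply: ler_sum => i _; rewrite -(beta_cell hc) -(beta_cell hc'); exact: hb.
    apply: (@le_trans _ _ (\sum_(i : 'I_(size s)) 8 * (2 ^+ l)^-1)).
      rewrite [X in X <= _]big_mkcond /=; apply: ler_sum => i _.
      case: ifP => // _; rewrite mulr_ge0 // ?invr_ge0 ?ltW //.
    by rewrite sumr_const card_ord (mulrC (size s)%:R) mulr_natr.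
  have c1 := wc_cellv R a pi j k'.
  have c2 := wc_cellv R a' pi' j k'.
  simpl in c1, c2.
  have eA : (a k' + (j <= (pi^-1)%g k') = a' k' + (j <= (pi'^-1)%g k'))%N.
    apply: (nat_close (R := R) (B := (8 * size s)%N) (Md := Md)) => //; try exact: hcode.
    rewrite -c1 -c2 -mulrBr normrM (ger0_norm (ltW h2)).
    rewrite (le_trans (ler_wpM2l (ltW h2) bnd)) //.
    have hne : (2 ^+ l : R) != 0 by rewrite gt_eqF.
    have -> : (2 ^+ l : R) * ((size s)%:R * (8 / 2 ^+ l)) = (size s)%:R * 8 by field.
    by rewrite natrM mulrC.
  have hne : (2 ^+ l : R) != 0 by rewrite gt_eqF.
  by apply: (mulfI hne); rewrite c1 c2 eA.
apply: (@eq_from_nth _ 0) => [|j hj]; first by rewrite hsz hsz'.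
have hj' : (j < size s)%N by rewrite -hsz.
pose jj := Ordinal hj'.
have -> : j = jj by [].
case: (cell_rep hc jj) => _ _ _ ->; case: (cell_rep hc' jj) => _ _ _ ->.
by apply: eq_bigr => i _; rewrite (L_ext (hw jj)).
Qed.

End C.

Section E.
Variable R : realType.
Variable N : nat.
Variable K : seq (seq 'rV[R]_N).
Variable r : rel 'rV[R]_N.
Hypothesis HK : ordered_simplicial_complex K r.
Hypothesis HK0 : K != [::].

Definition Mx := (\max_(s <- K) size s)%N.
Definition Md := (8 * Mx).+1.

Lemma size_le l t : crystalline K l t -> (size t <= Mx)%N.
Proof.
case/(crysP K) => s [a [pi [xs [[hs _ hsz _] hsub _]]]].
rewrite (leq_trans (size_subseq hsub)) // hsz.
exact: (leq_bigmax_seq (F := size) s hs isT).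
Qed.

Lemma top_full l D s a pi xs : top_simplex (crystalline K l) D ->
  @cellok R N K l s a pi xs -> subseq D xs -> D = xs.
Proof.
move=> [hD hmax] hc hsub.
have hP : crystalline K l xs.
  apply/crysP; exists s, a, pi, xs; split => //.
  case: hc => hs _ hsz _; rewrite -size_eq0 hsz size_eq0; exact: (K_nil HK hs).
have := hmax _ hP.
have := size_subseq_leqif hsub.
by case=> h1 h2 h3; apply/eqP; rewrite -h2 eqn_leq h1 h3.
Qed.

Lemma exists_P l : exists t, crystalline K l t.
Proof.
have [s0 hs0] : exists s0, s0 \in K.
  by case: K HK0 => // s K' _; exists s; rewrite mem_head.
have := K_nil HK hs0; case: s0 hs0 => [//|v s1] hs0 _.
have hv : [:: v] \in K.
  case: HK => _ h2 _ _ _; apply: (h2 _ _ hs0) => //=.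
  by rewrite eqxx sub0seq.
have h2l : (0 < 2 ^ l)%N by rewrite expn_gt0.
pose a := fun _ : 'I_0 => Ordinal h2l.
exists [:: v]; apply/crysP; exists [:: v], a, 1%g, [:: v]; split => //.
split => //.
- move=> j; exists (fun _ => 1); split => //; split; first by rewrite big_ord1.
  by apply/rowP => -[].
- move=> j; exists (fun _ => 1); split; first by rewrite big_ord1.
    by rewrite big_ord1 scale1r; case: j => -[|] //.
  by apply/rowP => -[].
Qed.


Lemma exists_top l : exists D, top_simplex (crystalline K l) D.
Proof.
pose Q := fun n => `[< exists t, crystalline K l t /\ size t = n >].
have ex : exists n, Q n.
  by case: (exists_P l) => t ht; exists (size t); apply/asboolP; exists t.
have bd : forall n, Q n -> (n <= Mx)%N.
  by move=> n /asboolP [t [ht <-]]; exact: size_le ht.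
case: (ex_maxnP ex bd) => n /asboolP [t [ht <-]] hmax.
exists t; split => // E hE; apply: hmax; apply/asboolP; by exists E.
Qed.

Definition canonP (Q : seq 'rV[R]_N -> Prop) : seq 'rV[R]_N :=
  match pselect (exists E, Q E) with
  | left H => projT1 (cid H)
  | right _ => [::]
  end.

Definition canon l (D : seq 'rV[R]_N) := canonP (fun E => top_simplex (crystalline K l) E /\ E =i D).

Lemma canon_spec l D : top_simplex (crystalline K l) D ->
  top_simplex (crystalline K l) (canon l D) /\ canon l D =i D.
Proof.
move=> hD; rewrite /canon /canonP; case: pselect => [H|H].
  by case: (cid H).
by exfalso; apply: H; exists D.
Qed.

Lemma canon_eq l D D' : D =i D' -> canon l D = canon l D'.
Proof.
move=> e; rewrite /canon; congr canonP; apply: funext => E.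
apply: propext; split; case=> h1 h2; split => // x.
  by rewrite h2 e.
by rewrite h2 -e.
Qed.


Definition Xt := ('I_(size K).+1 * {ffun 'I_Mx * 'I_Mx -> 'I_(8 * Mx).+1})%type.

Definition repT l := {s : seq 'rV[R]_N &
  (('I_(size s).-1 -> 'I_(2 ^ l)) * 'S_((size s).-1) * seq 'rV[R]_N)%type}.

Definition repok l E (p : repT l) :=
  @cellok R N K l (projT1 p) (projT2 p).1.1 (projT2 p).1.2 (projT2 p).2 /\
  subseq E (projT2 p).2.

Definition tab l (s : seq 'rV[R]_N) (a : 'I_(size s).-1 -> 'I_(2 ^ l))
  (pi : 'S_((size s).-1)) (j k : nat) : nat :=
  oapp (fun k' => ((a k' + (j <= (pi^-1)%g k')) %% Md)%N) 0%N (insub k).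

Definition code l (p : repT l) : Xt :=
  (inord (index (projT1 p) K),
   [ffun q : 'I_Mx * 'I_Mx => inord (tab (projT2 p).1.1 (projT2 p).1.2 q.1 q.2)]).

Definition kappa l D : Xt :=
  match pselect (exists p : repT l, repok (canon l D) p) with
  | left H => code (projT1 (cid H))
  | right _ => (ord0, [ffun _ => ord0])
  end.

Lemma kappa_spec l D : top_simplex (crystalline K l) D ->
  exists s a pi xs, [/\ @cellok R N K l s a pi xs, canon l D = xs &
     kappa l D = code (existT _ s (a, pi, xs) : repT l)].
Proof.
move=> hD; have [[hE hEmax] _] := canon_spec hD.
rewrite /kappa; case: pselect => [H|H].
  case: (cid H) => -[s [[a pi] xs]] [hc hsub] /=.
  exists s, a, pi, xs; split => //.
  exact: (top_full (conj hE hEmax) hc hsub).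
exfalso; apply: H.
case/(crysP K): hE => s [a [pi [xs [hc hsub _]]]].
by exists (existT _ s (a, pi, xs)).
Qed.

Lemma size_K s : s \in K -> (size s <= Mx)%N.
Proof. by move=> hs; exact: (leq_bigmax_seq (F := size) s hs isT). Qed.

Lemma nonempty_mem l (F : seq 'rV[R]_N) : crystalline K l F -> F`_0 \in F.
Proof.
by case/(crysP K) => s [a [pi [xs [_ _ hF]]]]; apply: mem_nth; rewrite lt0n size_eq0.
Qed.

Lemma proper l D D' : top_simplex (crystalline K l) D ->
  top_simplex (crystalline K l) D' -> ~ D =i D' ->
  stars_meet (crystalline K l) D D' -> kappa l D <> kappa l D'.
Proof.
move=> hD hD' hne hsm e.
have [[hE _] hED] := canon_spec hD.
have [[hE' _] hED'] := canon_spec hD'.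
case: (kappa_spec hD) => s [a [pi [xs [hc hcan hk]]]].
case: (kappa_spec hD') => s' [a' [pi' [xs' [hc' hcan' hk']]]].
rewrite hk hk' in e.
case: e => e1 e2.
have hs : s \in K by case: hc.
have hs' : s' \in K by case: hc'.
have ess : s = s'.
  move/(congr1 val): e1; rewrite /= !inordK ?ltnS ?index_size // => ei.
  by rewrite -(nth_index [::] hs) ei nth_index.
subst s'.
have hsM := size_K hs.
case: hsm => F [[hF [A [hA [F1 [hF1 hF1n hF1A hF1D]] hFA]]]
               [_ [A' [hA' [F2 [hF2 hF2n hF2A hF2D]] hFA']]]].
pose y := F`_0; pose z := F1`_0; pose z' := F2`_0.
have hy := nonempty_mem hF; have hz := nonempty_mem hF1; have hz' := nonempty_mem hF2.
have hb : forall (j : 'I_(size s)) v,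
    `|beta K (xs`_j) v - beta K (xs'`_j) v| <= 8 * (2 ^+ l)^-1.
  move=> j v.
  have hxs : crystalline K l xs by rewrite -hcan.
  have hxs' : crystalline K l xs' by rewrite -hcan'.
  have hsz : size xs = size s by case: hc.
  have hsz' : size xs' = size s by case: hc'.
  have m1 : xs`_j \in xs by apply: mem_nth; rewrite hsz.
  have m2 : z \in xs by rewrite -hcan hED; apply: hF1D.
  have m3 : xs'`_j \in xs' by apply: mem_nth; rewrite hsz'.
  have m4 : z' \in xs' by rewrite -hcan' hED'; apply: hF2D.
  have c1 := close HK hxs m1 m2 v.
  have c2 := close HK hA (hF1A _ hz) (hFA _ hy) v.
  have c3 := close HK hA' (hFA' _ hy) (hF2A _ hz') v.
  have c4 := close HK hxs' m4 m3 v.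
  set e0 := (2 ^+ l)^-1 in c1 c2 c3 c4 *.
  apply: (le_trans (ler_distD (beta K z v) _ _)).
  apply: (le_trans (lerD c1 (ler_distD (beta K y v) _ _))).
  apply: (le_trans (lerD (lexx _) (lerD c2 (ler_distD (beta K z' v) _ _)))).
  apply: (le_trans (lerD (lexx _) (lerD (lexx _) (lerD c3 c4)))).
  lra.
have hcode : forall (j : 'I_(size s)) (k : 'I_(size s).-1),
    ((a k + (j <= (pi^-1)%g k)) %% Md = (a' k + (j <= (pi'^-1)%g k)) %% Md)%N.
  move=> j k.
  have hj : (j < Mx)%N by apply: leq_trans hsM.
  have hkM : (k < Mx)%N by apply: leq_trans hsM; case: k => k /= hk0; lia.
  have := congr1 (fun f : {ffun 'I_Mx * 'I_Mx -> 'I_(8 * Mx).+1} => val (f (Ordinal hj, Ordinal hkM))) e2.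
  have hkk : insub (val k) = Some k by rewrite valK.
  rewrite !ffunE /= => h.
  have t1 : (tab a pi j k < (8 * Mx).+1)%N by rewrite /tab hkk /=; exact: ltn_pmod.
  have t2 : (tab a' pi' j k < (8 * Mx).+1)%N by rewrite /tab hkk /=; exact: ltn_pmod.
  by move: h; rewrite !inordK // /tab hkk.
have hMd : (8 * size s < Md)%N by rewrite /Md ltnS leq_mul2l hsM orbT.
have := key HK hc hc' hMd hcode hb.
move=> exs; apply: hne => x.
by rewrite -hED -hED' hcan hcan' exs.
Qed.


Lemma coloring_exists l : exists2 C', (C' <= #|{: Xt}|)%N &
  exists c, coloring (crystalline K l) c C'.
Proof.
pose T := fun D => top_simplex (crystalline K l) D.
pose U := [seq x <- enum {: Xt} | `[< exists D, T D /\ kappa l D = x >]].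
pose c := fun D => index (kappa l D) U.
pose x0 : Xt := (ord0, [ffun _ => ord0]).
have inU : forall D, T D -> kappa l D \in U.
  by move=> D hD; rewrite mem_filter mem_enum andbT; apply/asboolP; exists D.
have uU : uniq U by apply: filter_uniq; apply: enum_uniq.
have [D0 hD0] := exists_top l.
have sz : (0 < size U)%N.
  by rewrite lt0n size_eq0; apply/eqP => e; have := inU D0 hD0; rewrite e.
exists (size U).-1.
  apply: leq_trans (leq_pred _) _.
  by rewrite cardE /U size_filter count_size.
exists c; split.
- by move=> D D' hD hD' e; rewrite /c /kappa (canon_eq _ e).
- by move=> D hD; rewrite /c -ltnS prednK // index_mem inU.
- move=> k hk; have hk' : (k < size U)%N by lia.
  have := mem_nth x0 hk'; rewrite mem_filter => /andP [/asboolP [D [hD e]] _].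
  by exists D; split => //; rewrite /c e index_uniq.
- move=> D D' hD hD' hne hsm hc; apply: (proper hD hD' hne hsm).
  have := congr1 (nth x0 U) hc; rewrite !nth_index //; exact: inU.
Qed.

End E.

Theorem lemma3p3 (R : realType) (N : nat) (K : seq (seq 'rV[R]_N))
    (r : rel 'rV[R]_N) :
  ordered_simplicial_complex K r -> K != [::] ->
  exists C : nat, forall l : nat,
    exists2 C' : nat, (C' <= C)%N &
      exists c : seq 'rV[R]_N -> nat, coloring (crystalline K l) c C'.
Proof.
move=> HK HK0; exists #|{: Xt K}| => l.
exact: coloring_exists HK HK0 l.
Qed.
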